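(* Let $V$ be a $b$-complete semimodule over a $b$-complete idempotent semiring $K$. The following are equivalent: (1) $V$ has the $b$-approximation property, i.e. the identity operator $\mathrm{id}\colon V\to V$ is $b$-nuclear; (2) every $b$-linear mapping from $V$ to an arbitrary $b$-complete semimodule $W$ over $K$ is $b$-nuclear; (3) every $b$-linear mapping from an arbitrary $b$-complete semimodule $W$ over $K$ to $V$ is $b$-nuclear. In particular, $V$ is $b$-nuclear (i.e., condition (2) holds) if and only if $V$ has the $b$-approximation property.
   Context: Idempotent semigroup: commutative, associative, idempotent $\oplus$ with order $x\preceq y$ iff $x\oplus y=y$; $b$-complete: every bounded above subset (incl. $\emptyset$) has a least upper bound. A homomorphism of $b$-complete semigroups is a $b$-homomorphism if it preserves least upper bounds of bounded above subsets. Idempotent semiring: idempotent commutative associative $\oplus$, associative $\odot$ bi-distributive, unit $\mathbf 1$, zero $\mathbf 0$; $b$-complete if $b$-complete and $k\odot(\oplus X)=\oplus(k\odot X)$, $(\oplus X)\odot k=\oplus(X\odot k)$ for bounded $X$. Idempotent semimodule over $K$: idempotent semigroup with associative bi-distributive $K$-action, $\mathbf 1\odot x=x$, $\mathbf 0\odot x=\mathbf 0$; $b$-complete if $b$-complete as semigroup and $(\oplus Q)\odot x=\oplus(Q\odot x)$, $k\odot(\oplus X)=\oplus(k\odot X)$ for bounded $Q,X$. Linear: preserves $\oplus$ and scalar multiplication; $b$-linear: moreover a $b$-homomorphism; a $b$-linear functional is a $b$-linear map into $K$. A one-dimensional mapping $V\to W$ is one of the form $v\mapsto\phi(v)\odot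 w$ with $\phi$ a $b$-linear functional on $V$ and $w\in W$; a mapping is $b$-nuclear if it is the pointwise supremum of a set of one-dimensional mappings that is bounded above (pointwise). $V$ is $b$-nuclear if every $b$-linear mapping from $V$ to any $b$-complete semimodule over $K$ is $b$-nuclear. *)

(* Defs.v *)
Set Implicit Arguments.

Definition ileq {T : Type} (add : T -> T -> T) (x y : T) : Prop := add x y = y.

Definition upper_bound {T : Type} (add : T -> T -> T) (X : T -> Prop) (b : T) : Prop :=
  forall x, X x -> ileq add x b.

Definition bounded_above {T : Type} (add : T -> T -> T) (X : T -> Prop) : Prop :=
  exists b, upper_bound add X b.

Definition is_lub {T : Type} (add : T -> T -> T) (X : T -> Prop) (s : T) : Prop :=
  upper_bound add X s /\ forall b, upper_bound add X b -> ileq add s b.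

Definition img {A B : Type} (f : A -> B) (X : A -> Prop) : B -> Prop :=
  fun y => exists x, X x /\ y = f x.

Record bsemiring := BSemiring {
  kcar :> Type;
  kadd : kcar -> kcar -> kcar;
  kmul : kcar -> kcar -> kcar;
  kone : kcar;
  kzero : kcar;
  kadd_assoc : forall x y z, kadd x (kadd y z) = kadd (kadd x y) z;
  kadd_comm : forall x y, kadd x y = kadd y x;
  kadd_idem : forall x, kadd x x = x;
  kadd0 : forall x, kadd kzero x = x;
  kmul_assoc : forall x y z, kmul x (kmul y z) = kmul (kmul x y) z;
  kmul1l : forall x, kmul kone x = x;
  kmul1r : forall x, kmul x kone = x;
  kmul0l : forall x, kmul kzero x = kzero;
  kmul0r : forall x, kmul x kzero = kzero;
  kmulDl : forall x y z, kmul (kadd x y) z = kadd (kmul x z) (kmul y z);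
  kmulDr : forall x y z, kmul z (kadd x y) = kadd (kmul z x) (kmul z y);
  kbcomplete : forall X, bounded_above kadd X -> exists s, is_lub kadd X s;
  kmul_lub_l : forall k X s, is_lub kadd X s -> is_lub kadd (img (kmul k) X) (kmul k s);
  kmul_lub_r : forall k X s, is_lub kadd X s ->
    is_lub kadd (img (fun x => kmul x k) X) (kmul s k)
}.

Record bsemimodule (K : bsemiring) := BSemimodule {
  vcar :> Type;
  vadd : vcar -> vcar -> vcar;
  vscale : K -> vcar -> vcar;
  vzero : vcar;
  vadd_assoc : forall x y z, vadd x (vadd y z) = vadd (vadd x y) z;
  vadd_comm : forall x y, vadd x y = vadd y x;
  vadd_idem : forall x, vadd x x = x;
  vadd0 : forall x, vadd vzero x = x;
  vscale_assoc : forall (k l : K) x, vscale (@kmul K k l) x = vscale k (vscale l x);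
  vscaleDl : forall (k l : K) x, vscale (@kadd K k l) x = vadd (vscale k x) (vscale l x);
  vscaleDr : forall (k : K) x y, vscale k (vadd x y) = vadd (vscale k x) (vscale k y);
  vscale1 : forall x, vscale (@kone K) x = x;
  vscale0 : forall x, vscale (@kzero K) x = vzero;
  vbcomplete : forall X, bounded_above vadd X -> exists s, is_lub vadd X s;
  vscale_lub_l : forall (Q : K -> Prop) (q : K) x, is_lub (@kadd K) Q q ->
    is_lub vadd (img (fun k => vscale k x) Q) (vscale q x);
  vscale_lub_r : forall (k : K) X s, is_lub vadd X s ->
    is_lub vadd (img (vscale k) X) (vscale k s)
}.

Arguments vadd {K} _ _ _.
Arguments vscale {K} _ _ _.

Definition b_linear {K : bsemiring} (V W : bsemimodule K) (f : V -> W) : Prop :=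
  (forall x y, f (vadd V x y) = vadd W (f x) (f y)) /\
  (forall (k : K) x, f (vscale V k x) = vscale W k (f x)) /\
  (forall X s, bounded_above (vadd V) X -> is_lub (vadd V) X s ->
     is_lub (vadd W) (img f X) (f s)).

Definition b_linear_functional {K : bsemiring} (V : bsemimodule K) (phi : V -> K) : Prop :=
  (forall x y, phi (vadd V x y) = @kadd K (phi x) (phi y)) /\
  (forall (k : K) x, phi (vscale V k x) = @kmul K k (phi x)) /\
  (forall X s, bounded_above (vadd V) X -> is_lub (vadd V) X s ->
     is_lub (@kadd K) (img phi X) (phi s)).

Definition one_dimensional {K : bsemiring} (V W : bsemimodule K) (g : V -> W) : Prop :=
  exists (phi : V -> K) (w : W), b_linear_functional V phi /\ forall v, g v = vscale W (phi v) w.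

Definition b_nuclear_map {K : bsemiring} (V W : bsemimodule K) (f : V -> W) : Prop :=
  exists S : (V -> W) -> Prop,
    (forall g, S g -> one_dimensional V W g) /\
    (exists h : V -> W, forall g v, S g -> ileq (vadd W) (g v) (h v)) /\
    (forall v, is_lub (vadd W) (fun y => exists g, S g /\ y = g v) (f v)).

Definition b_approximation {K : bsemiring} (V : bsemimodule K) : Prop :=
  b_nuclear_map V V (fun v => v).

Definition b_nuclear_semimodule {K : bsemiring} (V : bsemimodule K) : Prop :=
  forall (W : bsemimodule K) (f : V -> W), b_linear V W f -> b_nuclear_map V W f.

(* Main.v *)
Require Import Defs.

Lemma lub_ext {T : Type} (add : T -> T -> T) (X Y : T -> Prop) s :
  (forall x, X x <-> Y x) -> is_lub add X s -> is_lub add Y s.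
Proof.
  intros H [H1 H2]; split.
  - intros x Hx; apply H1, H, Hx.
  - intros b Hb; apply H2; intros x Hx; apply Hb, H, Hx.
Qed.

Lemma id_b_linear {K : bsemiring} (V : bsemimodule K) : b_linear V V (fun v => v).
Proof.
  split; [|split]; try reflexivity.
  intros X s _ Hs; eapply lub_ext; [|exact Hs].
  intros x; split; [intros Hx; exists x; auto | intros [y [Hy ->]]; exact Hy].
Qed.

Lemma approx_to_right {K : bsemiring} (V : bsemimodule K) :
  b_approximation V ->
  forall (W : bsemimodule K) (f : V -> W), b_linear V W f -> b_nuclear_map V W f.
Proof.
  intros [S [HS [[h Hh] Hl]]] W f [fa [fs fl]].
  exists (fun g' => exists g, S g /\ g' = fun v => f (g v)).
  split; [|split].
  - intros g' [g [Hg ->]].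
    destruct (HS g Hg) as [phi [w [Hphi Hgw]]].
    exists phi, (f w); split; [exact Hphi|].
    intros v; rewrite Hgw; apply fs.
  - exists (fun v => f (h v)).
    intros g' v [g [Hg ->]].
    unfold ileq. rewrite <- fa. f_equal. apply (Hh g v Hg).
  - intros v.
    assert (Hb : bounded_above (vadd V) (fun y => exists g, S g /\ y = g v)).
    { exists v. apply (proj1 (Hl v)). }
    eapply lub_ext; [| exact (fl _ _ Hb (Hl v))].
    intros y; split.
    + intros [x [[g [Hg ->]] ->]]. exists (fun v => f (g v)). split; auto.
      exists g; auto.
    + intros [g' [[g [Hg ->]] ->]]. exists (g v). split; auto. exists g; auto.
Qed.

Lemma approx_to_left {K : bsemiring} (V : bsemimodule K) :
  b_approximation V ->
  forall (W : bsemimodule K) (f : W -> V), b_linear W V f -> b_nuclear_map W V f.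
Proof.
  intros [S [HS [[h Hh] Hl]]] W f [fa [fs fl]].
  exists (fun g' => exists g, S g /\ g' = fun v => g (f v)).
  split; [|split].
  - intros g' [g [Hg ->]].
    destruct (HS g Hg) as [phi [w [[pa [ps pl]] Hgw]]].
    exists (fun v => phi (f v)), w; split.
    + split; [|split].
      * intros x y; rewrite fa; apply pa.
      * intros k x; rewrite fs; apply ps.
      * intros X s Hb Hs.
        assert (Hfs := fl X s Hb Hs).
        assert (Hb' : bounded_above (vadd V) (img f X)).
        { exists (f s). apply (proj1 Hfs). }
        eapply lub_ext; [| exact (pl _ _ Hb' Hfs)].
        intros y; split.
        -- intros [x [[z [Hz ->]] ->]]. exists z; auto.
        -- intros [z [Hz ->]]. exists (f z); split; auto. exists z; auto.
    + intros v; apply Hgw.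
  - exists (fun v => h (f v)).
    intros g' v [g [Hg ->]]. apply (Hh g (f v) Hg).
  - intros v.
    eapply lub_ext; [| exact (Hl (f v))].
    intros y; split.
    + intros [g [Hg ->]]. exists (fun v => g (f v)). split; auto. exists g; auto.
    + intros [g' [[g [Hg ->]] ->]]. exists g; auto.
Qed.

Theorem proposition7p26 (K : bsemiring) (V : bsemimodule K) :
  (b_approximation V <->
     (forall (W : bsemimodule K) (f : V -> W), b_linear V W f -> b_nuclear_map V W f)) /\
  (b_approximation V <->
     (forall (W : bsemimodule K) (f : W -> V), b_linear W V f -> b_nuclear_map W V f)) /\
  (b_nuclear_semimodule V <-> b_approximation V).
Proof.
  split; [|split].
  - split; [apply approx_to_right|].
    intros H; exact (H V (fun v => v) (id_b_linear V)).
  - split; [apply approx_to_left|].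
    intros H; exact (H V (fun v => v) (id_b_linear V)).
  - split.
    + intros H; exact (H V (fun v => v) (id_b_linear V)).
    + intros H; exact (approx_to_right V H).
Qed.
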